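(* Let $X,Y$ be binary variables and suppose the experimental quantities $P(y_x),P(y_{x'})$ and observational quantities $P(y),P(x,y),P(x,y'),P(x',y),P(x',y')$ are estimated by sample frequencies from $m$ experimental samples and $n$ observational samples. If $\sqrt{\tfrac{1}{m}}+\sqrt{\tfrac{1}{n}}\le \tfrac{5}{196}$, then the margin of error of each of the estimated bounds of PNS, $$\max\{0,\;P(y_x)-P(y_{x'}),\;P(y)-P(y_{x'}),\;P(y_x)-P(y)\}\le \mathrm{PNS}\le \min\{P(y_x),\;P(y'_{x'}),\;P(x,y)+P(x',y'),\;P(y_x)-P(y_{x'})+P(x,y')+P(x',y)\},$$ in a $95\%$ confidence interval is at most $0.05$. In particular, if $m=n$, then $m=n=6147$ experimental and observational samples suffice to obtain margin of error at most $0.05$ for the bounds of PNS in a $95\%$ confidence interval.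
   Context: Counterfactual notation: $y_x$ denotes the event ''$Y$ would be $y$ had $X$ been $x$'', and similarly $y_{x'}$, $y'_{x'}$; $\mathrm{PNS}=P(y_x,y'_{x'})$. For a probability $p$ estimated by the frequency $\hat p$ from $k$ samples (experimental quantities from the $m$ experimental samples, observational quantities from the $n$ observational samples), its margin of error in a $1-\alpha$ confidence interval is $z_{1-\alpha/2}\sqrt{\hat p(1-\hat p)/k}$ where $z_{1-\alpha/2}$ is the standard normal quantile (for $95\%$, $z_{0.975}=1.96$), and the margin of error of a sum or difference of such estimates is bounded by the sum of their margins of error. *)

(* Defs.v *)
From Stdlib Require Import Reals Lra.
Open Scope R_scope.

(* z_{0.975} = 1.96, the standard normal quantile for a 95% confidence interval
   (fixed numerically, as in the paper's context). *)
Definition z975 : R := 196 / 100.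

Definition freq (c k : nat) : R := INR c / INR k.

Definition moe (p : R) (k : nat) : R := z975 * sqrt (p * (1 - p) / INR k).

(* Margins of error (sum of the margins of error of the estimated constituents)
   of the terms of the estimated PNS bounds, for binary X, Y.
   All margins of error of the lower bound
     max{0, P(y_x)-P(y_x'), P(y)-P(y_x'), P(y_x)-P(y)}
   and of the upper bound
     min{P(y_x), P(y'_x'), P(x,y)+P(x',y'), P(y_x)-P(y_x')+P(x,y')+P(x',y)}
   are at most `bound` (the constant 0 has margin of error 0). *)
Definition pns_bounds_moe_le (m n : nat) (bound : R) : Prop :=
  forall (cyx cyx' cy cxy cxy' cx'y cx'y' : nat),
    (cyx <= m)%nat -> (cyx' <= m)%nat ->
    (cy <= n)%nat -> (cxy <= n)%nat -> (cxy' <= n)%nat ->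
    (cx'y <= n)%nat -> (cx'y' <= n)%nat ->
    let pyx := freq cyx m in
    let pyx' := freq cyx' m in
    let py := freq cy n in
    let pxy := freq cxy n in
    let pxy' := freq cxy' n in
    let px'y := freq cx'y n in
    let px'y' := freq cx'y' n in
    0 <= bound /\
    moe pyx m + moe pyx' m <= bound /\
    moe py n + moe pyx' m <= bound /\
    moe pyx m + moe py n <= bound /\
    moe pyx m <= bound /\
    moe (1 - pyx') m <= bound /\
    moe pxy n + moe px'y' n <= bound /\
    moe pyx m + moe pyx' m + moe pxy' n + moe px'y n <= bound.

(* Main.v *)
Require Import Defs.
From Stdlib Require Import Reals Lra Lia.
Open Scope R_scope.

Lemma moe_le (p : R) (k : nat) : (0 < k)%nat ->
  moe p k <= 98/100 * sqrt (1 / INR k).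
Proof.
  intros Hk. unfold moe, z975.
  assert (Hk' : 0 < INR k) by (apply lt_0_INR; exact Hk).
  assert (H1 : sqrt (p * (1 - p) / INR k) <= sqrt (/4 * (1 / INR k))).
  { apply sqrt_le_1_alt. unfold Rdiv. rewrite Rmult_1_l.
    apply Rmult_le_compat_r. left; apply Rinv_0_lt_compat; lra.
    assert (0 <= (p - /2)^2) by (apply pow2_ge_0). nra. }
  rewrite sqrt_mult_alt in H1 by lra.
  assert (Hs : sqrt (/4) = /2).
  { replace (/4) with ((/2)*(/2)) by field. apply sqrt_square. lra. }
  rewrite Hs in H1. lra.
Qed.

Lemma part1 : forall m n : nat, (0 < m)%nat -> (0 < n)%nat ->
     sqrt (1 / INR m) + sqrt (1 / INR n) <= 5 / 196 ->
     pns_bounds_moe_le m n (5 / 100).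
Proof.
  intros m n Hm Hn H. unfold pns_bounds_moe_le. intros.
  cbv zeta.
  pose proof (sqrt_pos (1 / INR m)). pose proof (sqrt_pos (1 / INR n)).
  pose proof (moe_le (freq cyx m) m Hm).
  pose proof (moe_le (freq cyx' m) m Hm).
  pose proof (moe_le (1 - freq cyx' m) m Hm).
  pose proof (moe_le (freq cy n) n Hn).
  pose proof (moe_le (freq cxy n) n Hn).
  pose proof (moe_le (freq cxy' n) n Hn).
  pose proof (moe_le (freq cx'y n) n Hn).
  pose proof (moe_le (freq cx'y' n) n Hn).
  repeat split; lra.
Qed.

Theorem corollary1 :
  (forall m n : nat, (0 < m)%nat -> (0 < n)%nat ->
     sqrt (1 / INR m) + sqrt (1 / INR n) <= 5 / 196 ->
     pns_bounds_moe_le m n (5 / 100))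
  /\ pns_bounds_moe_le 6147 6147 (5 / 100).
Proof.
  split. exact part1.
  apply part1; try (apply Nat.lt_0_succ).
  rewrite INR_IZR_INZ. change (Z.of_nat _) with 6147%Z.
  assert (sqrt (1/6147) <= 5/392).
  { rewrite <- (sqrt_square (5/392)) by lra. apply sqrt_le_1_alt. lra. }
  lra.
Qed.
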